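(* Fix $q\ge2$ and $z\in\mathbb Z$, let $k=\lceil\log_q n\rceil+z$, $n'=n-k-2$ and $\Delta_n=\log_q n-\lceil\log_q n\rceil$. Then $$\lim_{n\to\infty}\frac{2^{n'E_{k,q}}}{\frac{q^n}{n}\cdot q^{\Delta_n-z-2}\,e^{-(q-1)q^{\Delta_n-z-1}}}=1.$$
   Context: $\Sigma_q=\{0,\dots,q-1\}$. A vector in $\Sigma_q^m$ is a $k$-RLL vector if $m<k$ or it has no run of $k$ consecutive zeros; $a_q(m,k)$ is their number, and $E_{k,q}=\lim_{m\to\infty}\frac{\log_2 a_q(m,k)}{m}$. It is known (Jain et al.) that $\lim_{k\to\infty}\frac{(q-1)(\log_2 e)q^{-k-2}}{\log_2 q-E_{k,q}}=1$. *)

(* Defs.v *)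
From Stdlib Require Import Reals List Arith ZArith ClassicalEpsilon.
Import ListNotations.
Open Scope R_scope.

Fixpoint words (q m : nat) : list (list nat) :=
  match m with
  | O => [ [] ]
  | S m' => flat_map (fun a => map (fun w => a :: w) (words q m')) (seq 0 q)
  end.

(* w contains a run of k consecutive zeros (k >= 1 for meaningful use). *)
Definition has_zero_run (k : nat) (w : list nat) : bool :=
  existsb (fun i => forallb (fun j => Nat.eqb (nth (i + j) w 1%nat) 0) (seq 0 k))
          (seq 0 (length w - k + 1)).

Definition is_RLL (k : nat) (w : list nat) : bool :=
  Nat.ltb (length w) k || negb (has_zero_run k w).

Definition a_q (q m k : nat) : nat := length (filter (is_RLL k) (words q m)).

Definition log2 (x : R) : R := ln x / ln 2.

(* E_{k,q} := lim_{m -> oo} log2 (a_q(m,k)) / m  (the limit, chosen by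
   Hilbert's epsilon; limits in R are unique). *)
Definition E_kq (k q : nat) : R :=
  epsilon (inhabits 0)
    (fun l => Un_cv (fun m => log2 (INR (a_q q m k)) / INR m) l).

Definition logb (q x : R) : R := ln x / ln q.
Definition Rceil (x : R) : Z := (- Int_part (- x))%Z.

(* Main.v *)
Require Import Defs.
From Stdlib Require Import Reals ZArith Lra Lia List Bool ClassicalEpsilon.
Import ListNotations.

Definition Pz (k i : nat) (l : list nat) : bool :=
  forallb (fun j => Nat.eqb (nth (i + j) l 1%nat) 0) (seq 0 k).

Fixpoint lz (l : list nat) : nat :=
  match l with [] => 0 | a :: l' => if Nat.eqb a 0 then S (lz l') else 0 end.

Lemma forallb_seq_shift (f : nat -> bool) s k :
  forallb f (seq (S s) k) = forallb (fun j => f (S j)) (seq s k).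
Proof. revert s; induction k; intros s; simpl; [reflexivity|]. rewrite IHk; reflexivity. Qed.

Lemma Pz0 k : forall l, Pz k 0 l = Nat.leb k (lz l).
Proof.
  induction k; intros l; [reflexivity|].
  unfold Pz. simpl seq. cbn [forallb]. rewrite forallb_seq_shift.
  destruct l as [|a l']; simpl.
  - reflexivity.
  - specialize (IHk l'). unfold Pz in IHk. simpl in IHk. rewrite IHk.
    destruct (Nat.eqb a 0); reflexivity.
Qed.

Lemma Pz_S k i a l : Pz k (S i) (a :: l) = Pz k i l.
Proof. reflexivity. Qed.

Lemma Pz_out k i l : (1 <= k)%nat -> (length l < i + k)%nat -> Pz k i l = false.
Proof.
  intros Hk Hl. destruct (Pz k i l) eqn:H; auto.
  unfold Pz in H. rewrite forallb_forall in H.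
  specialize (H (k - 1)%nat). rewrite nth_overflow in H by lia.
  assert (In (k-1)%nat (seq 0 k)) by (apply in_seq; lia).
  specialize (H H0). discriminate.
Qed.

Lemma hzr_iff k l : (1 <= k)%nat -> (has_zero_run k l = true <-> exists i, Pz k i l = true).
Proof.
  intros Hk. unfold has_zero_run. rewrite existsb_exists. split.
  - intros [i [_ H]]. exists i. exact H.
  - intros [i H]. exists i. split; [|exact H].
    apply in_seq. destruct (Nat.lt_ge_cases (length l) (i + k)) as [Hl|Hl].
    + rewrite Pz_out in H by lia. discriminate.
    + lia.
Qed.

Lemma hzr_cons k a l : (1 <= k)%nat ->
  has_zero_run k (a :: l) = has_zero_run k l || Nat.leb k (lz (a :: l)).
Proof.
  intros Hk. apply eq_iff_eq_true. rewrite orb_true_iff, !hzr_iff by exact Hk. split.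
  - intros [[|i] H].
    + right. rewrite <- Pz0. exact H.
    + left. exists i. exact H.
  - intros [[i H]|H].
    + exists (S i). exact H.
    + exists 0%nat. rewrite Pz0. exact H.
Qed.

Lemma hzr_false_lz k l : (1 <= k)%nat -> has_zero_run k l = false -> (lz l < k)%nat.
Proof.
  intros Hk H0. destruct (Nat.lt_ge_cases (lz l) k) as [|Hl]; auto.
  assert (has_zero_run k l = true) by (apply hzr_iff; auto; exists 0%nat; rewrite Pz0; apply Nat.leb_le; lia).
  congruence.
Qed.

Lemma rll_eq k l : (1 <= k)%nat -> is_RLL k l = negb (has_zero_run k l).
Proof.
  intros Hk. unfold is_RLL. destruct (Nat.ltb_spec (length l) k); simpl; auto.
  destruct (has_zero_run k l) eqn:E; auto.
  apply hzr_iff in E; auto. destruct E as [i E]. rewrite Pz_out in E by lia. discriminate.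
Qed.

Definition good (k c : nat) (l : list nat) : bool :=
  negb (has_zero_run k l) && Nat.ltb (lz l + c) k.

Definition g (q k m c : nat) : nat := length (filter (good k c) (words q m)).

Lemma good_cons0 k c l : (1 <= k)%nat -> good k c (0%nat :: l) = good k (S c) l.
Proof.
  intros Hk. unfold good. rewrite hzr_cons by exact Hk. simpl lz.
  replace (Nat.eqb 0 0) with true by reflexivity.
  replace (S (lz l) + c)%nat with (lz l + S c)%nat by lia.
  destruct (has_zero_run k l) eqn:H; simpl; auto.
  destruct (Nat.leb_spec k (S (lz l)));
  destruct (Nat.ltb_spec (lz l + S c) k); simpl; auto; lia.
Qed.

Lemma good_consa k c a l : (1 <= k)%nat -> a <> 0%nat ->
  good k c (a :: l) = Nat.ltb c k && good k 0 l.
Proof.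
  intros Hk Ha. unfold good. rewrite hzr_cons by exact Hk. simpl lz.
  destruct (Nat.eqb_spec a 0); [lia|].
  destruct (has_zero_run k l) eqn:H; simpl.
  - destruct (Nat.ltb c k); reflexivity.
  - apply hzr_false_lz in H; auto.
    destruct (Nat.leb_spec k 0); [lia|]. simpl.
    destruct (Nat.ltb_spec (lz l + 0) k); [|lia]. rewrite andb_true_r. reflexivity.
Qed.

Lemma count_cons (f : list nat -> bool) a W :
  length (filter f (map (cons a) W)) = length (filter (fun l => f (a :: l)) W).
Proof. induction W; simpl; auto. destruct (f (a :: a0)); simpl; auto. Qed.

Lemma flat_count (f : list nat -> bool) W s v :
  (forall a, In a s -> length (filter f (map (cons a) W)) = v) ->
  length (filter f (flat_map (fun a => map (cons a) W) s)) = (length s * v)%nat.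
Proof.
  induction s; intros H; simpl; auto.
  rewrite filter_app, length_app, H by (left; auto). rewrite IHs; auto.
  intros; apply H; right; auto.
Qed.

Lemma filter_false_len {A} (f : A -> bool) W : (forall x, f x = false) -> length (filter f W) = 0%nat.
Proof. intros H; induction W; simpl; auto. rewrite H; auto. Qed.

Lemma g_S q k m c : (1 <= k)%nat -> (1 <= q)%nat ->
  g q k (S m) c = (g q k m (S c) + (q - 1) * (if Nat.ltb c k then g q k m 0 else 0))%nat.
Proof.
  intros Hk Hq. unfold g. simpl words.
  destruct q as [|q']; [lia|]. simpl seq. cbn [flat_map]. rewrite filter_app, length_app.
  f_equal.
  - rewrite count_cons. f_equal. apply filter_ext. intros l. apply good_cons0; auto.
  - rewrite flat_count with (v := if Nat.ltb c k then length (filter (good k 0) (words (S q') m)) else 0%nat).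
    + rewrite length_seq. f_equal. lia.
    + intros a Ha. apply in_seq in Ha. rewrite count_cons.
      rewrite (filter_ext _ (fun l => Nat.ltb c k && good k 0 l)).
      2:{ intros l. apply good_consa; auto; lia. }
      destruct (Nat.ltb c k); simpl.
      * reflexivity.
      * apply filter_false_len; auto.
Qed.

Lemma g_0 q k c : (1 <= k)%nat -> g q k 0 c = if Nat.ltb c k then 1%nat else 0%nat.
Proof.
  intros Hk. unfold g. simpl. unfold good.
  assert (has_zero_run k [] = false).
  { destruct (has_zero_run k []) eqn:H; auto. apply hzr_iff in H; auto.
    destruct H as [i H]. rewrite Pz_out in H by (simpl; lia). discriminate. }
  rewrite H. simpl. destruct (Nat.ltb c k); reflexivity.
Qed.

Lemma g_ge q k m c : (k <= c)%nat -> g q k m c = 0%nat.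
Proof.
  intros H. unfold g. apply filter_false_len. intros l. unfold good.
  destruct (Nat.ltb_spec (lz l + c) k); [lia|]. apply andb_false_r.
Qed.

Lemma aq_g q m k : (1 <= k)%nat -> a_q q m k = g q k m 0.
Proof.
  intros Hk. unfold a_q, g. f_equal. apply filter_ext. intros l.
  rewrite rll_eq by exact Hk. unfold good.
  destruct (has_zero_run k l) eqn:H; simpl; auto.
  apply hzr_false_lz in H; auto. symmetry. apply Nat.ltb_lt. lia.
Qed.

Open Scope R_scope.

Lemma ln_le' a b : 0 < a -> a <= b -> ln a <= ln b.
Proof. intros Ha Hab. destruct (Rle_lt_or_eq_dec a b Hab). left; apply ln_increasing; auto. right; subst; auto. Qed.
Lemma exp_le' a b : a <= b -> exp a <= exp b.
Proof. intros Hab. destruct (Rle_lt_or_eq_dec a b Hab). left; apply exp_increasing; auto. right; subst; auto. Qed.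

Section B.
Variables (q k : nat) (lam : R).
Hypothesis Hq : (2 <= q)%nat.
Hypothesis Hk : (1 <= k)%nat.
Hypothesis Hl1 : 1 < lam.
Hypothesis HlQ : lam < INR q.
Hypothesis Hroot : lam ^ k * (INR q - lam) = INR q - 1.

Let Q := INR q.
Let s := Q - lam.
Definition uu (c : nat) : R := (Q - 1 - lam ^ c * s) / (lam - 1).

Lemma uu_rec c : lam * uu c = uu (S c) + (Q - 1).
Proof. unfold uu. simpl. field. lra. Qed.

Lemma uu0 : uu 0 = 1.
Proof. unfold uu, s. simpl. field. lra. Qed.

Lemma uuk : uu k = 0.
Proof. unfold uu, s. fold Q in Hroot. rewrite Hroot. unfold Rdiv. ring. Qed.

Lemma Q2 : 2 <= Q.
Proof. unfold Q. apply (le_INR 2) in Hq. simpl in Hq. lra. Qed.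

Lemma g_S_R m c : (c < k)%nat ->
  INR (g q k (S m) c) = INR (g q k m (S c)) + (Q - 1) * INR (g q k m 0).
Proof.
  intros Hc. rewrite g_S by lia. rewrite plus_INR, mult_INR, minus_INR by lia.
  destruct (Nat.ltb_spec c k); [|lia]. unfold Q. simpl. ring.
Qed.

Lemma gbounds : forall m c, (c <= k)%nat ->
  (lam - 1) / (Q - 1) * lam ^ m * uu c <= INR (g q k m c) <= lam / (Q - 1) * lam ^ m * uu c.
Proof.
  pose proof Q2 as HQ.
  induction m; intros c Hc.
  - rewrite g_0 by lia. destruct (Nat.ltb_spec c k).
    + unfold uu. simpl. assert (H0 : 0 <= lam ^ c * s).
      { apply Rmult_le_pos; [apply pow_le; lra | unfold s, Q; lra]. }
      assert (H1 : lam ^ S c <= lam ^ k). { apply Rle_pow. lra. lia. }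
      assert (H2 : lam ^ S c * s <= Q - 1).
      { fold Q in Hroot. rewrite <- Hroot. apply Rmult_le_compat_r; [unfold s, Q; lra|auto]. }
      simpl in H2. split.
      * unfold Rdiv. rewrite Rmult_1_r.
        replace ((lam - 1) * / (Q - 1) * ((Q - 1 - lam ^ c * s) * / (lam - 1)))
          with ((Q - 1 - lam ^ c * s) / (Q - 1)) by (field; lra).
        apply Rmult_le_reg_r with (Q-1); [lra|]. unfold Rdiv.
        rewrite Rmult_assoc, Rinv_l by lra. lra.
      * unfold Rdiv. rewrite Rmult_1_r.
        replace (lam * / (Q - 1) * ((Q - 1 - lam ^ c * s) * / (lam - 1)))
          with ((lam * (Q - 1) - lam * (lam ^ c * s)) / ((Q - 1) * (lam - 1))) by (field; lra).
        apply Rmult_le_reg_r with ((Q-1)*(lam-1)); [nra|]. unfold Rdiv.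
        rewrite Rmult_assoc, Rinv_l by nra. nra.
    + assert (c = k) by lia. subst c. rewrite uuk. simpl. lra.
  - destruct (Nat.lt_ge_cases c k) as [Hc'|Hc'].
    + rewrite g_S_R by auto.
      destruct (IHm (S c)) as [A1 A2]; [lia|]. destruct (IHm 0%nat) as [B1 B2]; [lia|].
      rewrite uu0 in B1, B2.
      replace ((lam - 1) / (Q - 1) * lam ^ S m * uu c) with
        ((lam - 1) / (Q - 1) * lam ^ m * uu (S c) + (Q - 1) * ((lam - 1) / (Q - 1) * lam ^ m * 1))
        by (replace ((lam - 1) / (Q - 1) * lam ^ S m * uu c) with ((lam - 1) / (Q - 1) * lam ^ m * (lam * uu c)) by (simpl; ring); rewrite uu_rec; ring).
      replace (lam / (Q - 1) * lam ^ S m * uu c) with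
        (lam / (Q - 1) * lam ^ m * uu (S c) + (Q - 1) * (lam / (Q - 1) * lam ^ m * 1))
        by (replace (lam / (Q - 1) * lam ^ S m * uu c) with (lam / (Q - 1) * lam ^ m * (lam * uu c)) by (simpl; ring); rewrite uu_rec; ring).
      assert (0 <= Q - 1) by lra. split.
      * apply Rplus_le_compat; [auto| apply Rmult_le_compat_l; auto].
      * apply Rplus_le_compat; [auto| apply Rmult_le_compat_l; auto].
    + assert (c = k) by lia. subst c. rewrite uuk, g_ge by lia. simpl. lra.
Qed.

Lemma abounds m : (lam - 1) / (Q - 1) * lam ^ m <= INR (a_q q m k) <= lam / (Q - 1) * lam ^ m.
Proof.
  rewrite aq_g by auto. destruct (gbounds m 0) as [A B]; [lia|]. rewrite uu0 in A, B. lra.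
Qed.

Lemma E_value : E_kq k q = ln lam / ln 2.
Proof.
  pose proof Q2 as HQ.
  assert (Hcv : Un_cv (fun m => log2 (INR (a_q q m k)) / INR m) (ln lam / ln 2)).
  { set (al := (lam - 1) / (Q - 1)). set (be := lam / (Q - 1)).
    assert (Hal : 0 < al) by (unfold al; apply Rdiv_lt_0_compat; lra).
    assert (Hbe : 0 < be) by (unfold be; apply Rdiv_lt_0_compat; lra).
    set (M := Rabs (ln al) + Rabs (ln be)).
    assert (Hln2 : 0 < ln 2) by (rewrite <- ln_1; apply ln_increasing; lra).
    intros eps Heps.
    destruct (archimed (M / (eps * ln 2))) as [Hup _].
    exists (S (Z.to_nat (up (M / (eps * ln 2))))). intros m Hm.
    assert (HmR : M / (eps * ln 2) < INR m).
    { apply Rlt_le_trans with (IZR (up (M / (eps * ln 2)))); [lra|].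
      destruct (Z_lt_le_dec (up (M / (eps * ln 2))) 0).
      - apply Rle_trans with 0; [apply IZR_le; lia| apply pos_INR].
      - rewrite INR_IZR_INZ. apply IZR_le. lia. }
    assert (Hm0 : 0 < INR m) by (apply lt_0_INR; lia).
    destruct (abounds m) as [A B]. fold al be in A, B.
    assert (Hp : 0 < lam ^ m) by (apply pow_lt; lra).
    assert (HA : 0 < INR (a_q q m k)) by nra.
    assert (L1 : ln al + INR m * ln lam <= ln (INR (a_q q m k))).
    { rewrite <- ln_pow by lra. rewrite <- ln_mult by nra. apply ln_le'; nra. }
    assert (L2 : ln (INR (a_q q m k)) <= ln be + INR m * ln lam).
    { rewrite <- ln_pow by lra. rewrite <- ln_mult by nra. apply ln_le'; nra. }
    unfold R_dist, log2.
    replace (ln (INR (a_q q m k)) / ln 2 / INR m - ln lam / ln 2)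
      with ((ln (INR (a_q q m k)) - INR m * ln lam) / (INR m * ln 2)) by (field; lra).
    assert (Hb : Rabs (ln (INR (a_q q m k)) - INR m * ln lam) <= M).
    { unfold M. apply Rabs_le. split.
      - pose proof (Rabs_pos (ln be)). pose proof (Rle_abs (- ln al)). rewrite Rabs_Ropp in H0. lra.
      - pose proof (Rabs_pos (ln al)). pose proof (Rle_abs (ln be)). lra. }
    assert (HM : M < eps * ln 2 * INR m).
    { apply (Rmult_lt_compat_r (eps * ln 2)) in HmR; [|nra].
      unfold Rdiv in HmR. rewrite Rmult_assoc, Rinv_l in HmR by nra. lra. }
    unfold Rdiv. rewrite Rabs_mult, Rabs_inv, (Rabs_right (INR m * ln 2)) by nra.
    apply Rle_lt_trans with (M * / (INR m * ln 2)).
    { apply Rmult_le_compat_r; [|auto]. left. apply Rinv_0_lt_compat; nra. }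
    apply Rmult_lt_reg_r with (INR m * ln 2); [nra|].
    rewrite Rmult_assoc, Rinv_l by nra. lra. }
  unfold E_kq.
  apply UL_sequence with (fun m => log2 (INR (a_q q m k)) / INR m); [|exact Hcv].
  apply epsilon_spec. exists (ln lam / ln 2). exact Hcv.
Qed.
End B.


Lemma bern (x : R) (n : nat) : 0 <= x <= 1 -> 1 - INR n * x <= (1 - x) ^ n.
Proof.
  intros Hx. induction n.
  - simpl. lra.
  - rewrite S_INR. simpl.
    assert (0 <= INR n) by apply pos_INR.
    assert ((1 - x) * (1 - INR n * x) <= (1 - x) * (1 - x) ^ n) by (apply Rmult_le_compat_l; lra).
    nra.
Qed.

Lemma pow2_bound (Q : R) (k : nat) : 2 <= Q -> (INR k + 2) * (INR k + 2) <= 8 * Q ^ k.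
Proof.
  intros HQ. induction k.
  - simpl. lra.
  - rewrite S_INR. simpl.
    assert (0 <= INR k) by apply pos_INR.
    assert (0 <= Q ^ k) by (apply pow_le; lra).
    assert (HQk : 2 * Q ^ k <= Q * Q ^ k) by nra.
    destruct k.
    + simpl in *. lra.
    + rewrite S_INR in *. pose proof (pos_INR k).
      assert ((INR k + 1 + 1 + 2) * (INR k + 1 + 1 + 2) <= 2 * ((INR k + 1 + 2) * (INR k + 1 + 2))) by nra.
      lra.
Qed.

Lemma root_ex (Q : R) (k : nat) : 2 <= Q -> (1 <= k)%nat -> 5 * (INR k + 2) <= Q ^ k ->
  exists lam, Q - 2 * (Q - 1) / Q ^ k <= lam < Q /\ lam ^ k * (Q - lam) = Q - 1 /\ 1 < lam.
Proof.
  intros HQ Hk HY.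
  set (Y := Q ^ k) in *.
  assert (HY0 : 0 < Y) by (unfold Y; apply pow_lt; lra).
  assert (Hk1 : 1 <= INR k) by (apply (le_INR 1); auto).
  set (t := 2 * (Q - 1) / Y).
  assert (Ht0 : 0 < t) by (unfold t; apply Rdiv_lt_0_compat; lra).
  assert (HtY : t * Y = 2 * (Q - 1)) by (unfold t; field; lra).
  assert (Ht1 : t * 15 <= 2 * (Q - 1)) by nra.
  set (f := fun x => Q - 1 - x ^ k * (Q - x)).
  assert (Hc : continuity f) by (unfold f; reg).
  assert (Hf1 : f (Q - t) < 0).
  { unfold f. replace (Q - (Q - t)) with t by ring.
    replace (Q - t) with (Q * (1 - t / Q)) by (field; lra).
    rewrite Rpow_mult_distr. fold Y.
    assert (B := bern (t / Q) k).
    assert (0 <= t / Q <= 1).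
    { split. left; apply Rdiv_lt_0_compat; lra. apply Rmult_le_reg_r with Q; [lra|].
      unfold Rdiv; rewrite Rmult_assoc, Rinv_l by lra. lra. }
    specialize (B H).
    assert (INR k * (t / Q) <= 2/5).
    { unfold Rdiv. apply Rmult_le_reg_r with (Q * Y); [nra|].
      replace (INR k * (t * / Q) * (Q * Y)) with (INR k * (t * Y)) by (field; lra).
      rewrite HtY. nra. }
    assert (3/5 * Y * t <= Y * (1 - t / Q) ^ k * t).
    { assert (3/5 <= (1 - t / Q) ^ k) by lra.
      apply Rmult_le_compat_r; [lra|]. rewrite (Rmult_comm (3/5)). apply Rmult_le_compat_l; lra. }
    lra. }
  assert (Hf2 : 0 < f Q) by (unfold f; cbv beta; rewrite Rminus_diag, Rmult_0_r; lra).
  destruct (IVT f (Q - t) Q Hc ltac:(lra) Hf1 Hf2) as [lam [[H1 H2] H3]].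
  exists lam. unfold f in H3. split; [split|split].
  - unfold t in H1. exact H1.
  - destruct (Rle_lt_or_eq_dec _ _ H2); auto. subst lam. unfold f in Hf2. lra.
  - lra.
  - lra.
Qed.


Lemma ln_le'' a b : 0 < a -> a <= b -> ln a <= ln b.
Proof. intros Ha Hab. destruct (Rle_lt_or_eq_dec a b Hab). left; apply ln_increasing; auto. right; subst; auto. Qed.

Lemma ln_div' x y : 0 < x -> 0 < y -> ln (x / y) = ln x - ln y.
Proof. intros. unfold Rdiv. rewrite ln_mult, ln_Rinv; auto. apply Rinv_0_lt_compat; auto. Qed.

Lemma Xbound (Q lam n rho R0 : R) (k : nat) :
  2 <= Q -> 5 * (INR k + 2) <= Q ^ k -> Q - 2 * (Q - 1) / Q ^ k <= lam -> lam < Q ->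
  lam ^ k * (Q - lam) = Q - 1 -> 1 < lam ->
  INR k + 2 <= n -> n = rho * (Q * Q ^ k) -> rho <= R0 -> 0 <= rho ->
  Rabs ((n - (INR k + 2)) * (ln lam - ln Q) + (Q - 1) * rho)
    <= (Q - 1) * (1 + 4 * R0) * (INR k + 2) / Q ^ k.
Proof.
  intros HQ HY Hl1 Hl2 Hroot Hl3 Hn Hrho HR0 Hrho0.
  set (Y := Q ^ k) in *.
  assert (HY0 : 0 < Y) by (unfold Y; apply pow_lt; lra).
  set (s := Q - lam) in *.
  assert (Hs0 : 0 < s) by (unfold s; lra).
  assert (HsY : s * Y <= 2 * (Q - 1)).
  { assert (Q - lam <= 2 * (Q - 1) / Y) by lra.
    apply Rmult_le_compat_r with (r := Y) in H; [|lra]. unfold Rdiv in H.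
    rewrite Rmult_assoc, Rinv_l in H by lra. fold s in H. lra. }
  assert (HlkY : lam ^ k <= Y) by (unfold Y; apply pow_incr; lra).
  set (n' := n - (INR k + 2)) in *.
  assert (Hn' : 0 <= n') by (unfold n'; lra).
  set (L := ln lam - ln Q).
  assert (HL1 : L <= - s / Q).
  { unfold L. rewrite <- ln_div' by lra. rewrite <- (ln_exp (- s / Q)).
    apply ln_le''. apply Rdiv_lt_0_compat; lra.
    pose proof (exp_ineq1_le (- s / Q)).
    replace (lam / Q) with (1 + - s / Q) by (unfold s; field; lra). lra. }
  assert (HL2 : - s / lam <= L).
  { unfold L. assert (ln Q - ln lam <= s / lam).
    { rewrite <- ln_div' by lra. rewrite <- (ln_exp (s / lam)).
      apply ln_le''. apply Rdiv_lt_0_compat; lra.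
      pose proof (exp_ineq1_le (s / lam)).
      replace (Q / lam) with (1 + s / lam) by (unfold s; field; lra). lra. }
    unfold Rdiv in *. lra. }
  assert (Hk0 : 0 <= INR k) by apply pos_INR.
  assert (HR00 : 0 <= R0) by lra.
  apply Rabs_le. split.
  -
    assert (E1 : n' * (- s / lam) <= n' * L) by (apply Rmult_le_compat_l; auto).
    set (d := 2 * (INR k + 1) / Y).
    assert (Hd : d <= 2 / 5).
    { unfold d. apply Rmult_le_reg_r with Y; auto. unfold Rdiv.
      rewrite Rmult_assoc, Rinv_l by lra. lra. }
    assert (Hd0 : 0 <= d) by (unfold d; left; apply Rdiv_lt_0_compat; lra).
    set (P := lam ^ S k).
    assert (HP : Q * Y * (1 - d) <= P).
    { unfold P. replace lam with (Q * (1 - s / Q)) by (unfold s; field; lra).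
      rewrite Rpow_mult_distr.
      assert (B := bern (s / Q) (S k)).
      assert (0 <= s / Q <= 1).
      { split. left; apply Rdiv_lt_0_compat; lra.
        apply Rmult_le_reg_r with Q; [lra|]. unfold Rdiv; rewrite Rmult_assoc, Rinv_l by lra.
        unfold s; lra. }
      specialize (B H). rewrite S_INR in B.
      assert ((INR k + 1) * (s / Q) <= d).
      { unfold d. apply Rmult_le_reg_r with (Q * Y); [nra|].
        replace ((INR k + 1) * (s / Q) * (Q * Y)) with ((INR k + 1) * (s * Y)) by (field; lra).
        replace (2 * (INR k + 1) / Y * (Q * Y)) with (2 * (INR k + 1) * Q) by (field; lra).
        nra. }
      replace (Q ^ S k) with (Q * Y) by (unfold Y; simpl; ring).
      assert (0 < Q * Y) by nra.
      apply Rmult_le_compat_l; lra. }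
    assert (HP0 : 0 < P) by (unfold P; apply pow_lt; lra).
    assert (HPs : P * s = lam * (Q - 1)) by (unfold P; simpl; rewrite <- Hroot; fold s; ring).
    assert (E2 : n * (s / lam) = rho * (Q - 1) * (Q * Y / P)).
    { assert (HQ1 : Q - 1 = P * s / lam) by (rewrite HPs; field; lra).
      rewrite Hrho, HQ1. field. split; lra. }
    assert (E3 : Q * Y / P <= 1 + 2 * d).
    { apply Rmult_le_reg_r with P; auto. unfold Rdiv. rewrite Rmult_assoc, Rinv_l by lra.
      rewrite Rmult_1_r.
      assert (A1 : (1 + 2 * d) * (Q * Y * (1 - d)) <= (1 + 2 * d) * P) by (apply Rmult_le_compat_l; lra).
      assert (A2 : 0 <= d * (1 - 2 * d) * (Q * Y)) by (apply Rmult_le_pos; [apply Rmult_le_pos; lra| nra]).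
      nra. }
    assert (E4 : n' * (s / lam) <= n * (s / lam)).
    { apply Rmult_le_compat_r. left; apply Rdiv_lt_0_compat; lra. unfold n'; lra. }
    assert (E5 : rho * (Q - 1) * (Q * Y / P) <= rho * (Q - 1) * (1 + 2 * d)).
    { apply Rmult_le_compat_l; auto. nra. }
    assert (E6 : rho * (Q - 1) * d <= R0 * (Q - 1) * d) by (apply Rmult_le_compat_r; auto; nra).
    assert (E7 : R0 * (Q - 1) * d * 2 <= (Q - 1) * (4 * R0) * (INR k + 2) / Y).
    { unfold d. unfold Rdiv. apply Rmult_le_reg_r with Y; auto.
      replace (R0 * (Q - 1) * (2 * (INR k + 1) * / Y) * 2 * Y) with (R0 * (Q - 1) * (4 * (INR k + 1))) by (field; lra).
      replace ((Q - 1) * (4 * R0) * (INR k + 2) * / Y * Y) with ((Q - 1) * (4 * R0) * (INR k + 2)) by (field; lra).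
      nra. }
    assert (E8 : 0 <= (Q - 1) * (INR k + 2) / Y).
    { left. apply Rdiv_lt_0_compat; nra. }
    assert (E9 : (Q - 1) * (1 + 4 * R0) * (INR k + 2) / Y = (Q - 1) * (INR k + 2) / Y + (Q - 1) * (4 * R0) * (INR k + 2) / Y) by (field; lra).
    rewrite E9.
    replace (n' * (- s / lam)) with (- (n' * (s / lam))) in E1 by (unfold Rdiv; ring).
    lra.
  -
    assert (E1 : n' * L <= n' * (- s / Q)) by (apply Rmult_le_compat_l; auto).
    assert (E2 : Q - 1 <= s * Y).
    { rewrite <- Hroot. fold s. rewrite Rmult_comm. apply Rmult_le_compat_l; lra. }
    assert (E3 : n' * (- s / Q) + (Q - 1) * rho <= (Q - 1) * (INR k + 2) / Y).
    { apply Rmult_le_reg_r with (Q * Y); [nra|].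
      replace ((n' * (- s / Q) + (Q - 1) * rho) * (Q * Y)) with (- n' * (s * Y) + (Q - 1) * (rho * (Q * Y))) by (field; lra).
      replace ((Q - 1) * (INR k + 2) / Y * (Q * Y)) with ((Q - 1) * (INR k + 2) * Q) by (field; lra).
      rewrite <- Hrho.
      assert (- n' * (s * Y) <= - n' * (Q - 1)) by nra.
      assert (Z1 : (Q - 1) * (INR k + 2) <= (Q - 1) * (INR k + 2) * Q) by (rewrite <- (Rmult_1_r ((Q - 1) * (INR k + 2))) at 1; apply Rmult_le_compat_l; nra).
      assert (Z2 : - n' * (Q - 1) + (Q - 1) * n = (Q - 1) * (INR k + 2)) by (unfold n'; ring).
      lra. }
    assert (E4 : (Q - 1) * (INR k + 2) / Y <= (Q - 1) * (1 + 4 * R0) * (INR k + 2) / Y).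
    { unfold Rdiv. apply Rmult_le_compat_r. left; apply Rinv_0_lt_compat; lra. assert (0 <= (Q - 1) * (INR k + 2) * (4 * R0)) by (repeat apply Rmult_le_pos; lra). lra. }
    lra.
Qed.


Lemma exp_near (X : R) : Rabs X <= 1/2 -> Rabs (exp X - 1) <= 2 * Rabs X.
Proof.
  intros H. pose proof (Rle_abs X). pose proof (exp_ineq1_le X) as E1.
  destruct (Rle_or_lt 0 X) as [HX|HX].
  - rewrite (Rabs_right X) by lra. rewrite Rabs_right by lra.
    pose proof (exp_ineq1_le (- X)) as E2.
    assert (exp X * exp (- X) = 1) by (rewrite <- exp_plus; replace (X + - X) with 0 by ring; apply exp_0).
    assert (0 < exp X) by apply exp_pos. nra.
  - rewrite (Rabs_left X) by lra.
    assert (exp X < 1) by (rewrite <- exp_0; apply exp_increasing; lra).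
    rewrite Rabs_left by lra. lra.
Qed.

Lemma expr_id (Q : R) (n : nat) (x : R) (kZ C z : Z) (lam : R) :
  1 < Q -> 0 < lam -> 0 < INR n -> x * ln Q = ln (INR n) -> IZR kZ = IZR C + IZR z ->
  Rpower 2 (IZR (Z.of_nat n - kZ - 2) * (ln lam / ln 2)) /
  ((Q ^ n / INR n) * Rpower Q (x - IZR C - IZR z - 2)
   * exp (- (Q - 1) * Rpower Q (x - IZR C - IZR z - 1)))
  = exp ((INR n - (IZR kZ + 2)) * (ln lam - ln Q)
         + (Q - 1) * Rpower Q (x - IZR C - IZR z - 1)).
Proof.
  intros HQ Hl Hn Hx HkZ.
  set (RR := Rpower Q (x - IZR C - IZR z - 1)).
  assert (HlnQ : 0 < ln Q) by (rewrite <- ln_1; apply ln_increasing; lra).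
  assert (Hln2 : 0 < ln 2) by (rewrite <- ln_1; apply ln_increasing; lra).
  rewrite <- (Rpower_pow n Q) by lra.
  rewrite <- (exp_ln (INR n)) at 2 by lra.
  unfold Rpower at 1 2 3.
  replace (exp (INR n * ln Q) / exp (ln (INR n)) * exp ((x - IZR C - IZR z - 2) * ln Q) * exp (- (Q - 1) * RR))
    with (exp (INR n * ln Q - ln (INR n) + (x - IZR C - IZR z - 2) * ln Q + - (Q - 1) * RR)).
  2:{ rewrite !exp_plus. unfold Rminus at 1. rewrite exp_plus, exp_Ropp. unfold Rdiv. ring. }
  unfold Rdiv at 1. rewrite <- exp_Ropp, <- exp_plus. f_equal.
  rewrite !minus_IZR, <- INR_IZR_INZ, <- Hx, HkZ. field. lra.
Qed.


Lemma up_nat (r : R) : 0 < r -> r < INR (Z.to_nat (up r)) /\ (1 <= Z.to_nat (up r))%nat.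
Proof.
  intros Hr. destruct (archimed r) as [H1 _].
  assert (0 < up r)%Z by (apply lt_IZR; lra).
  rewrite INR_IZR_INZ, Z2Nat.id by lia. split; [lra|lia].
Qed.

Theorem lemma5 (q : nat) (z : Z) (hq : (2 <= q)%nat) :
  Un_cv
    (fun n : nat =>
       let k : Z := (Rceil (logb (INR q) (INR n)) + z)%Z in
       let n' : Z := (Z.of_nat n - k - 2)%Z in
       let Delta : R := logb (INR q) (INR n) - IZR (Rceil (logb (INR q) (INR n))) in
       Rpower 2 (IZR n' * E_kq (Z.to_nat k) q) /
       ((INR q ^ n / INR n) * Rpower (INR q) (Delta - IZR z - 2)
        * exp (- (INR q - 1) * Rpower (INR q) (Delta - IZR z - 1))))
    1.
Proof.
  set (Q := INR q).
  assert (HQ : 2 <= Q) by (unfold Q; apply (le_INR 2) in hq; simpl in hq; lra).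
  assert (HlnQ : 0 < ln Q) by (rewrite <- ln_1; apply ln_increasing; lra).
  set (R0 := exp ((- IZR z - 1) * ln Q)).
  set (r0 := exp ((- IZR z - 2) * ln Q)).
  assert (Hr0 : 0 < r0) by apply exp_pos.
  assert (HR0 : 0 < R0) by apply exp_pos.
  set (Cst := (Q - 1) * (1 + 4 * R0)).
  assert (HC : 0 < Cst) by (unfold Cst; nra).
  intros eps Heps.
  set (m := Rmin (Rmin (1/5) r0) (Rmin (eps / (4 * Cst)) (1 / (2 * Cst)))).
  assert (Hm0 : 0 < m).
  { unfold m. repeat apply Rmin_glb_lt; try lra; apply Rdiv_lt_0_compat; lra. }
  assert (Hm1 : m <= 1/5) by (unfold m; eapply Rle_trans; [apply Rmin_l|apply Rmin_l]).
  assert (Hm2 : m <= r0) by (unfold m; eapply Rle_trans; [apply Rmin_l|apply Rmin_r]).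
  assert (Hm3 : m <= eps / (4 * Cst)) by (unfold m; eapply Rle_trans; [apply Rmin_r|apply Rmin_l]).
  assert (Hm4 : m <= 1 / (2 * Cst)) by (unfold m; eapply Rle_trans; [apply Rmin_r|apply Rmin_r]).
  destruct (up_nat (8 / m)) as [HK1 HK2]; [apply Rdiv_lt_0_compat; lra|].
  set (K := Z.to_nat (up (8 / m))) in *.
  assert (Hsmall : forall k, (K <= k)%nat -> INR k + 2 <= m * Q ^ k).
  { intros k Hk. apply le_INR in Hk.
    pose proof (pow2_bound Q k HQ).
    assert (8 <= (INR k + 2) * m).
    { apply Rmult_le_reg_r with (/ m). apply Rinv_0_lt_compat; lra.
      rewrite Rmult_assoc, Rinv_r, Rmult_1_r by lra. unfold Rdiv in HK1. lra. }
    assert (0 < INR k + 2) by (pose proof (pos_INR k); lra).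
    nra. }
  set (T := exp ((INR K - IZR z) * ln Q)).
  destruct (up_nat T) as [HN1 HN2]; [apply exp_pos|].
  exists (Z.to_nat (up T)). intros n Hn.
  apply le_INR in Hn.
  assert (Hn0 : 0 < INR n) by (pose proof (exp_pos ((INR K - IZR z) * ln Q)); fold T in H; lra).
  assert (HlnN : (INR K - IZR z) * ln Q < ln (INR n)).
  { rewrite <- (ln_exp ((INR K - IZR z) * ln Q)). apply ln_increasing. apply exp_pos. fold T. lra. }
  cbv beta zeta.
  set (x := logb Q (INR n)).
  assert (Hx : x = ln (INR n) / ln Q) by reflexivity.
  assert (HxK : INR K - IZR z < x).
  { rewrite Hx. apply Rmult_lt_reg_r with (ln Q); auto. unfold Rdiv.
    rewrite Rmult_assoc, Rinv_l, Rmult_1_r by lra. lra. }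
  set (C := Rceil x).
  assert (HC1 : x <= IZR C /\ IZR C < x + 1).
  { unfold C, Rceil. destruct (base_Int_part (- x)) as [A B]. rewrite opp_IZR. lra. }
  set (kZ := (C + z)%Z).
  assert (HkZ : (Z.of_nat K < kZ)%Z).
  { apply lt_IZR. unfold kZ. rewrite plus_IZR, <- INR_IZR_INZ. lra. }
  set (k := Z.to_nat kZ).
  assert (Hkk : INR k = IZR kZ) by (unfold k; rewrite INR_IZR_INZ, Z2Nat.id by lia; reflexivity).
  assert (HKk : (K <= k)%nat) by (unfold k; lia).
  assert (Hk1 : (1 <= k)%nat) by lia.
  pose proof (Hsmall k HKk) as Hs.
  set (Y := Q ^ k) in *.
  assert (HY0 : 0 < Y) by (unfold Y; apply pow_lt; lra).
  assert (HY5 : 5 * (INR k + 2) <= Y) by nra.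
  destruct (root_ex Q k HQ Hk1 HY5) as [lam [[Hl1 Hl2] [Hroot Hl3]]].
  rewrite (E_value q k lam hq Hk1 Hl3 Hl2 Hroot).
  rewrite (expr_id Q n x kZ C z lam) by (try lra; try (rewrite Hx; field; lra); unfold kZ; apply plus_IZR).
  set (rho := Rpower Q (x - IZR C - IZR z - 1)).
  assert (Hrho1 : rho <= R0).
  { unfold rho, Rpower, R0. apply exp_le'. apply Rmult_le_compat_r; lra. }
  assert (Hrho2 : r0 <= rho).
  { unfold rho, Rpower, r0. apply exp_le'. apply Rmult_le_compat_r; lra. }
  assert (Hnr : INR n = rho * (Q * Y)).
  { replace (Q * Y) with (Q ^ S k) by (unfold Y; simpl; ring).
    rewrite <- (Rpower_pow (S k) Q) by lra. unfold rho, Rpower.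
    rewrite <- exp_plus, S_INR, Hkk. unfold kZ. rewrite plus_IZR.
    replace ((x - IZR C - IZR z - 1) * ln Q + (IZR C + IZR z + 1) * ln Q) with (x * ln Q) by ring.
    rewrite Hx. replace (ln (INR n) / ln Q * ln Q) with (ln (INR n)) by (field; lra).
    rewrite exp_ln; auto. }
  assert (Hnk : INR k + 2 <= INR n).
  { rewrite Hnr. assert (Y <= Q * Y) by nra. nra. }
  pose proof (Xbound Q lam (INR n) rho R0 k HQ HY5 Hl1 Hl2 Hroot Hl3 Hnk Hnr Hrho1 ltac:(lra)) as HX.
  fold Y in HX. rewrite <- Hkk.
  set (X := (INR n - (INR k + 2)) * (ln lam - ln Q) + (Q - 1) * rho) in *.
  assert (HXm : Rabs X <= Cst * m).
  { eapply Rle_trans; [exact HX|]. fold Cst. unfold Rdiv. rewrite Rmult_assoc.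
    apply Rmult_le_compat_l; [lra|]. apply Rmult_le_reg_r with Y; auto.
    rewrite Rmult_assoc, Rinv_l, Rmult_1_r by lra. lra. }
  assert (HX1 : Rabs X <= 1/2).
  { eapply Rle_trans; [exact HXm|]. apply Rmult_le_reg_r with (/ Cst). apply Rinv_0_lt_compat; lra.
    rewrite (Rmult_comm Cst), Rmult_assoc, Rinv_r, Rmult_1_r by lra.
    eapply Rle_trans; [exact Hm4|]. right. field. lra. }
  assert (HX2 : Rabs X <= eps / 4).
  { eapply Rle_trans; [exact HXm|]. apply Rmult_le_reg_r with (/ Cst). apply Rinv_0_lt_compat; lra.
    rewrite (Rmult_comm Cst), Rmult_assoc, Rinv_r, Rmult_1_r by lra.
    eapply Rle_trans; [exact Hm3|]. right. field. lra. }
  try unfold R_dist; try unfold Rdist. pose proof (exp_near X HX1). lra.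
Qed.
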